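(* With the notation of the context, for every sufficiently small $\varepsilon>0$ the following holds. For each $i\ge0$ there exists an open $C^\infty$ curve $\gamma_i$ properly embedded in the strip $[2i,2i+1]\times\mathbb R$ such that: (1) the $y$-component of the unit tangent vector of $\gamma_i$ is nonzero at every point and bounded below by a positive constant along the whole curve; (2) $\gamma_i$ contains all the points $p^i_l=(\Delta^l(c_i)+2i,\,l)$, $l\ge0$; (3) the curvature $\kappa_i$ of $\gamma_i$ satisfies $|\kappa_i(p)|<15$ for all $p\in\gamma_i$; (4) for all $l\ge0$, $\gamma_i$ coincides near $p^i_l$ with the vertical segment $\{(\Delta^l(c_i)+2i,y):y\in(l-\varepsilon,l+\varepsilon)\}$. In particular $\gamma_i$ has infinite length.
   Context: A Turing machine with alphabet $\{0,\dots,9\}$ ($0$ blank) and states $Q=\{1,\dots,m\}$ is fixed. Tapes have finitely many nonzero symbols, written $\dots00t_{-a}\dots t_b00\dots$; $s$ is the integer with decimal digits $t_{-a}\dots t_{-1}$ and $r$ the integer with decimal digits $t_b\dots t_0$; configurations $(q,t)$ are encoded as $\varphi(q,t)=\frac{1}{2^q3^r5^s}\in[0,1]$. $\Delta$ is the global one-step transition function on configurations, extended by $\Delta(q_{halt},t)=(q_{halt},t)$. The initial configurations (state $q_0$) are identified with their encodings and listed as $c_0>c_1>\cdots$; $\Delta^l(c_i)\in[0,1]$ denotes the encoding of the configuration after $l$ steps starting from $c_i$. *)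

(* Defs.v *)
From Stdlib Require Import Reals Lra Arith.
From Coquelicot Require Import Coquelicot.
Open Scope R_scope.

(** * Turing machines over the alphabet {0,...,9} (0 = blank), states {1..m} *)

Inductive move := MoveL | MoveR.

Record TM := {
  tm_m : nat;
  tm_q0 : nat;
  tm_qh : nat;
  tm_delta : nat -> nat -> nat * nat * move    (* (state, read symbol) |-> (new state, written symbol, head move) *)
}.

Definition TM_wf (M : TM) : Prop :=
  (1 <= tm_q0 M <= tm_m M)%nat /\ (1 <= tm_qh M <= tm_m M)%nat /\
  forall q a, (1 <= q <= tm_m M)%nat -> (a < 10)%nat ->
    let '(q', w, _) := tm_delta M q a in (1 <= q' <= tm_m M)%nat /\ (w < 10)%nat.

(** A configuration (q,t) is represented by (q, r, s), where the tape
    t = ... 0 0 t_{-a} ... t_b 0 0 ... (head on cell 0) is represented by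
    r = the integer with decimal digits t_b ... t_0  (so t_j = j-th digit of r, j >= 0)
    s = the integer with decimal digits t_{-a} ... t_{-1} (so t_{-j} = (j-1)-th digit of s).
    This is a bijection between finitely supported tapes and pairs (r,s). *)
Definition config := (nat * nat * nat)%type.

Definition step (M : TM) (c : config) : config :=
  let '(q, r, s) := c in
  if Nat.eqb q (tm_qh M) then c else
  let '(q', w, d) := tm_delta M q (r mod 10) in
  let r1 := (10 * (r / 10) + w)%nat in       (* tape after writing w on cell 0 *)
  match d with
  | MoveR => (q', (r1 / 10)%nat, (10 * s + w)%nat)
  | MoveL => (q', (10 * r1 + s mod 10)%nat, (s / 10)%nat)
  end.

Definition enc (c : config) : R :=
  let '(q, r, s) := c in / (2 ^ q * 3 ^ r * 5 ^ s).

Definition Delta_iter (M : TM) (l : nat) (c : config) : config :=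
  Nat.iter l (step M) c.

Definition init_cfg (M : TM) (rs : nat * nat) : config :=
  (tm_q0 M, fst rs, snd rs).

Definition init_enum (M : TM) (c : nat -> nat * nat) : Prop :=
  (forall i, enc (init_cfg M (c (S i))) < enc (init_cfg M (c i))) /\
  (forall r s, exists i, c i = (r, s)).

Definition smooth (f : R -> R) : Prop := forall n t, ex_derive_n f n t.

(** A properly embedded open C^infinity curve: smooth regular injective
    parametrization of R which is a proper map (preimages of bounded sets
    are bounded, i.e. |gamma(t)| -> infinity as |t| -> infinity). *)
Definition properly_embedded_curve (gx gy : R -> R) : Prop :=
  smooth gx /\ smooth gy /\
  (forall t, Derive gx t <> 0 \/ Derive gy t <> 0) /\
  (forall t1 t2, gx t1 = gx t2 -> gy t1 = gy t2 -> t1 = t2) /\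
  (forall B, exists T, forall t, T < Rabs t -> B < sqrt (gx t ^ 2 + gy t ^ 2)).

Definition speed (gx gy : R -> R) (t : R) : R :=
  sqrt (Derive gx t ^ 2 + Derive gy t ^ 2).

Definition unit_tangent_y (gx gy : R -> R) (t : R) : R :=
  Derive gy t / speed gx gy t.

Definition curvature (gx gy : R -> R) (t : R) : R :=
  (Derive gx t * Derive_n gy 2 t - Derive gy t * Derive_n gx 2 t) / (speed gx gy t ^ 3).

(* Main.v *)
Require Import Defs.
From Stdlib Require Import Reals Lra Lia ZArith.
From Coquelicot Require Import Coquelicot.
Open Scope R_scope.

Definition Cn (n : nat) (f : R -> R) := forall k x, (k <= n)%nat -> ex_derive_n f k x.

Lemma Dn_S_eq f k x : Derive_n f (S k) x = Derive_n (Derive f) k x.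
Proof.
  replace (S k) with (k + 1)%nat by lia. rewrite <- (Derive_n_comp f k 1). reflexivity.
Qed.

Lemma exdn_SS f k x : ex_derive_n f (S (S k)) x <-> ex_derive_n (Derive f) (S k) x.
Proof.
  change (ex_derive (Derive_n f (S k)) x <-> ex_derive (Derive_n (Derive f) k) x).
  split; apply ex_derive_ext; intro t; [apply (Dn_S_eq f k t)| symmetry; apply (Dn_S_eq f k t)].
Qed.

Lemma Cn_S n f : (forall x, ex_derive f x) -> Cn n (Derive f) -> Cn (S n) f.
Proof.
  intros H1 H2 k x Hk. destruct k as [|k]. exact I. destruct k as [|k].
  change (ex_derive (fun x => f x) x). apply H1.
  apply (proj2 (exdn_SS f k x)). apply H2. lia.
Qed.

Lemma Cn_S_inv n f : Cn (S n) f -> (forall x, ex_derive f x) /\ Cn n (Derive f).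
Proof.
  intros H. split.
  - intro x. exact (H 1%nat x ltac:(lia)).
  - intros k x Hk. destruct k as [|k]. exact I. apply (proj1 (exdn_SS f k x)). apply H. lia.
Qed.

Lemma Cn_0 f : Cn 0 f.
Proof. intros k x Hk. destruct k; [exact I| lia]. Qed.

Lemma Cn_ext n f g : (forall x, f x = g x) -> Cn n f -> Cn n g.
Proof. intros E H k x Hk. apply ex_derive_n_ext with f; auto. Qed.

Lemma Cn_le m n f : (m <= n)%nat -> Cn n f -> Cn m f.
Proof. intros Hmn H k x Hk. apply H. lia. Qed.

Lemma Cn_const n c : Cn n (fun _ => c).
Proof. intros k x Hk. apply ex_derive_n_const. Qed.

Lemma Cn_id n : Cn n (fun x => x).
Proof.
  induction n. apply Cn_0. apply Cn_S. intro; apply ex_derive_id.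
  apply Cn_ext with (fun _ => 1). intro x. symmetry. apply (Derive_id x). apply Cn_const.
Qed.

Lemma Cn_plus n f g : Cn n f -> Cn n g -> Cn n (fun x => f x + g x).
Proof.
  revert f g. induction n; intros f g Hf Hg. apply Cn_0.
  destruct (Cn_S_inv _ _ Hf) as [Df Hf']. destruct (Cn_S_inv _ _ Hg) as [Dg Hg'].
  apply Cn_S. intro x. apply (ex_derive_plus f g x); auto.
  apply Cn_ext with (fun x => Derive f x + Derive g x).
  intro x. symmetry. apply Derive_plus; auto. auto.
Qed.

Lemma Cn_mult n f g : Cn n f -> Cn n g -> Cn n (fun x => f x * g x).
Proof.
  revert f g. induction n; intros f g Hf Hg. apply Cn_0.
  destruct (Cn_S_inv _ _ Hf) as [Df Hf']. destruct (Cn_S_inv _ _ Hg) as [Dg Hg'].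
  apply Cn_S. intro x. apply ex_derive_mult; auto.
  apply Cn_ext with (fun x => Derive f x * g x + f x * Derive g x).
  intro x. symmetry. apply Derive_mult; auto.
  apply Cn_plus; apply IHn; auto; apply Cn_le with (S n); auto.
Qed.

Lemma Cn_inv n g : (forall x, g x <> 0) -> Cn n g -> Cn n (fun x => / g x).
Proof.
  intro Hnz. revert g Hnz. induction n; intros g Hnz Hg. apply Cn_0.
  destruct (Cn_S_inv _ _ Hg) as [Dg Hg'].
  apply Cn_S. intro x. apply ex_derive_inv; auto.
  apply Cn_ext with (fun x => (-1) * Derive g x * (/ g x * / g x)).
  intro x. rewrite Derive_inv; auto. field. auto.
  apply Cn_mult. apply Cn_mult; auto. apply Cn_const.
  apply Cn_mult; apply IHn; auto; apply Cn_le with (S n); auto.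
Qed.

Lemma Cn_comp n f g : Cn n f -> Cn n g -> Cn n (fun x => f (g x)).
Proof.
  revert f g. induction n; intros f g Hf Hg. apply Cn_0.
  destruct (Cn_S_inv _ _ Hf) as [Df Hf']. destruct (Cn_S_inv _ _ Hg) as [Dg Hg'].
  apply Cn_S. intro x. apply (ex_derive_comp f g x); auto.
  apply Cn_ext with (fun x => Derive g x * Derive f (g x)).
  intro x. symmetry. apply Derive_comp; auto.
  apply Cn_mult; auto. apply IHn; auto; apply Cn_le with (S n); auto.
Qed.

Lemma Cn_exp n : Cn n exp.
Proof.
  induction n. apply Cn_0. apply Cn_S. intro x. apply ex_derive_Reals_1. apply derivable_pt_exp.
  apply Cn_ext with exp. intro x. symmetry. apply is_derive_unique. apply is_derive_exp. auto.
Qed.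

Lemma Cn_loc n f : (forall x, exists h, Cn n h /\ locally x (fun t => h t = f t)) -> Cn n f.
Proof.
  intros H k x Hk. destruct (H x) as [h [Hh Hl]]. apply ex_derive_n_ext_loc with h; auto.
Qed.

Inductive pinv : (R -> R) -> Prop :=
| pinv_const c : pinv (fun _ => c)
| pinv_inv : pinv (fun x => / x)
| pinv_plus f g : pinv f -> pinv g -> pinv (fun x => f x + g x)
| pinv_mult f g : pinv f -> pinv g -> pinv (fun x => f x * g x).

Lemma pinv_deriv P : pinv P -> exists Q, pinv Q /\ forall x, 0 < x -> is_derive P x (Q x).
Proof.
  induction 1.
  - exists (fun _ => 0). split. constructor. intros x Hx. auto_derive; auto.
  - exists (fun x => (-1) * (/ x * / x)). split. repeat constructor.
    intros x Hx. auto_derive. lra. field. lra.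
  - destruct IHpinv1 as [Q1 [H1 D1]]. destruct IHpinv2 as [Q2 [H2 D2]].
    exists (fun x => Q1 x + Q2 x). split. constructor; auto.
    intros x Hx. apply (is_derive_plus f g). auto. auto.
  - destruct IHpinv1 as [Q1 [H1 D1]]. destruct IHpinv2 as [Q2 [H2 D2]].
    exists (fun x => Q1 x * g x + f x * Q2 x). split. repeat constructor; auto.
    intros x Hx. apply (is_derive_mult f g). auto. auto. intros; apply Rmult_comm.
Qed.

Lemma pinv_bound P : pinv P -> exists C k, 0 <= C /\ forall x, 0 < x <= 1 -> Rabs (P x) <= C * (/ x) ^ k.
Proof.
  assert (Hge : forall x, 0 < x <= 1 -> 1 <= / x).
  { intros x Hx. rewrite <- Rinv_1. apply Rinv_le_contravar; lra. }
  induction 1.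
  - exists (Rabs c), 0%nat. split. apply Rabs_pos. intros. simpl. lra.
  - exists 1, 1%nat. split. lra. intros x Hx. simpl. rewrite Rabs_right. lra.
    apply Rle_ge. apply Rlt_le, Rinv_0_lt_compat; lra.
  - destruct IHpinv1 as [C1 [k1 [P1 H1]]]. destruct IHpinv2 as [C2 [k2 [P2 H2]]].
    exists (C1 + C2), (k1 + k2)%nat. split. lra. intros x Hx.
    specialize (H1 x Hx). specialize (H2 x Hx). specialize (Hge x Hx).
    assert (E1 : (/ x) ^ k1 <= (/ x) ^ (k1 + k2)) by (apply Rle_pow; [lra| lia]).
    assert (E2 : (/ x) ^ k2 <= (/ x) ^ (k1 + k2)) by (apply Rle_pow; [lra| lia]).
    eapply Rle_trans. apply Rabs_triang.
    assert (C1 * (/x)^k1 <= C1 * (/x)^(k1+k2)) by (apply Rmult_le_compat_l; auto).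
    assert (C2 * (/x)^k2 <= C2 * (/x)^(k1+k2)) by (apply Rmult_le_compat_l; auto).
    nra.
  - destruct IHpinv1 as [C1 [k1 [P1 H1]]]. destruct IHpinv2 as [C2 [k2 [P2 H2]]].
    exists (C1 * C2), (k1 + k2)%nat. split. nra. intros x Hx.
    specialize (H1 x Hx). specialize (H2 x Hx). rewrite Rabs_mult, pow_add.
    replace (C1 * C2 * ((/ x) ^ k1 * (/ x) ^ k2)) with ((C1 * (/ x) ^ k1) * (C2 * (/ x) ^ k2)) by ring.
    apply Rmult_le_compat; auto; apply Rabs_pos.
Qed.

Lemma exp_ge_pow x n : 0 <= x -> x ^ n / INR (Factorial.fact n) <= exp x.
Proof.
  intros Hx. eapply Rle_trans; [| apply (exp_ge_taylor x n Hx)].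
  destruct n. simpl. lra. rewrite tech5.
  assert (0 <= sum_f_R0 (fun k : nat => x ^ k / INR (Factorial.fact k)) n).
  { apply cond_pos_sum. intro k. apply Rle_mult_inv_pos. apply pow_le; auto.
    apply lt_0_INR, Factorial.lt_O_fact. }
  lra.
Qed.

Definition Fl (P : R -> R) (x : R) : R :=
  if Rlt_dec 0 x then P x * exp (- / x) else 0.

Lemma Fl_at0 P : pinv P -> is_derive (Fl P) 0 0.
Proof.
  intros HP. destruct (pinv_bound P HP) as [C [k [HC Hb]]].
  apply is_derive_Reals. intros eps Heps.
  set (K := C * INR (Factorial.fact (S (S k))) + 1).
  assert (HK : 0 < K). { unfold K. assert (0 < INR (Factorial.fact (S (S k)))) by apply lt_0_INR, Factorial.lt_O_fact. nra. }
  assert (Hd : 0 < Rmin 1 (eps / K)). { apply Rmin_pos. lra. apply Rdiv_lt_0_compat; lra. }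
  exists (mkposreal _ Hd). intros h Hh Hlt. simpl in Hlt.
  unfold Fl. rewrite Rplus_0_l. destruct (Rlt_dec 0 0) as [F|_]; [lra|].
  destruct (Rlt_dec 0 h) as [Hp|Hn].
  2: { replace ((0 - 0) / h - 0) with 0 by (field; lra). rewrite Rabs_R0. auto. }
  rewrite Rabs_right in Hlt by lra.
  assert (Hh1 : h < 1) by (eapply Rlt_le_trans; [apply Hlt| apply Rmin_l]).
  assert (Hh2 : h < eps / K) by (eapply Rlt_le_trans; [apply Hlt| apply Rmin_r]).
  specialize (Hb h ltac:(lra)).
  set (u := / h). assert (Hu : 1 <= u). { unfold u. rewrite <- Rinv_1. apply Rinv_le_contravar; lra. }
  assert (He := exp_ge_pow u (S (S k)) ltac:(lra)).
  assert (Hf : 0 < INR (Factorial.fact (S (S k)))) by apply lt_0_INR, Factorial.lt_O_fact.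
  set (N := INR (Factorial.fact (S (S k)))) in *.
  assert (Hexp : exp (- u) * exp u = 1). { rewrite <- exp_plus. replace (-u+u) with 0 by ring. apply exp_0. }
  assert (Hep : 0 < exp (- u)) by apply exp_pos.
  assert (Hpk : 0 < u ^ k) by (apply pow_lt; lra).
  (* |P h * e / h| <= C u^k e u = C u^(k+1) e <= C N / u *)
  replace ((P h * exp (- u) - 0) / h - 0) with (P h * exp (- u) * u) by (unfold u; field; lra).
  rewrite Rabs_mult, Rabs_mult, (Rabs_right (exp _)) by lra. rewrite (Rabs_right u) by lra.
  assert (Hk2 : u ^ S (S k) = u^k * u * u) by (simpl; ring).
  rewrite Hk2 in He.
  assert (Hb2 : exp (- u) * (u ^ k * u * u) <= N).
  { apply Rmult_le_reg_r with (/ N). apply Rinv_0_lt_compat; lra.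
    replace (N * / N) with 1 by (field; lra).
    rewrite <- Hexp. replace (exp (- u) * (u ^ k * u * u) * / N) with (exp (-u) * (u ^ k * u * u / N)) by (field; lra).
    apply Rmult_le_compat_l; lra. }
  assert (Habs : Rabs (P h) * exp (- u) * u <= C * N * h).
  { apply Rle_trans with (C * u ^ k * exp (- u) * u).
    apply Rmult_le_compat_r. lra. apply Rmult_le_compat_r. lra. unfold u. lra.
    replace h with (/ u) by (unfold u; field; lra).
    apply Rmult_le_reg_r with (u * u). nra.
    replace (C * N * / u * (u * u)) with (C * N * u) by (field; lra).
    replace (C * u ^ k * exp (- u) * u * (u * u)) with (C * (exp (- u) * (u ^ k * u * u)) * u) by ring.
    apply Rmult_le_compat_r. lra. apply Rmult_le_compat_l; lra. }
  assert (C * N * h < eps).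
  { apply Rle_lt_trans with (K * h). unfold K. nra.
    apply Rmult_lt_reg_r with (/ K). apply Rinv_0_lt_compat; lra.
    replace (K * h * / K) with h by (field; lra). lra. }
  lra.
Qed.

Lemma loc_int a b x : a < x < b -> locally x (fun t => a < t < b).
Proof.
  intros H. assert (He : 0 < Rmin (x - a) (b - x)) by (apply Rmin_pos; lra).
  exists (mkposreal _ He). intros y Hy.
  change (Rabs (y - x) < Rmin (x - a) (b - x)) in Hy.
  apply Rabs_lt_between' in Hy. destruct Hy as [H1 H2].
  assert (Rmin (x - a) (b - x) <= x - a) by apply Rmin_l.
  assert (Rmin (x - a) (b - x) <= b - x) by apply Rmin_r. lra.
Qed.

Lemma loc_lt a x : x < a -> locally x (fun t => t < a).
Proof.
  intros H. assert (He : 0 < a - x) by lra. exists (mkposreal _ He). intros y Hy.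
  change (Rabs (y - x) < a - x) in Hy. apply Rabs_lt_between' in Hy. lra.
Qed.

Lemma loc_gt a x : a < x -> locally x (fun t => a < t).
Proof.
  intros H. assert (He : 0 < x - a) by lra. exists (mkposreal _ He). intros y Hy.
  change (Rabs (y - x) < x - a) in Hy. apply Rabs_lt_between' in Hy. lra.
Qed.

Lemma Fl_deriv P : pinv P -> exists Q, pinv Q /\ forall x, is_derive (Fl P) x (Fl Q x).
Proof.
  intros HP. destruct (pinv_deriv P HP) as [Q0 [HQ0 D0]].
  exists (fun x => Q0 x + P x * (/ x * / x)). split.
  { repeat constructor; auto. }
  intro x. destruct (Rtotal_order x 0) as [Hn|[Hz|Hp]].
  - apply is_derive_ext_loc with (fun _ => 0).
    { generalize (loc_lt 0 x Hn). apply filter_imp. intros t Ht. unfold Fl.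
      destruct (Rlt_dec 0 t); [lra|auto]. }
    unfold Fl. destruct (Rlt_dec 0 x); [lra|]. auto_derive; auto.
  - subst x. unfold Fl at 2. destruct (Rlt_dec 0 0); [lra|]. apply Fl_at0; auto.
  - apply is_derive_ext_loc with (fun t => P t * exp (- / t)).
    { generalize (loc_gt 0 x Hp). apply filter_imp. intros t Ht. unfold Fl.
      destruct (Rlt_dec 0 t); [auto|lra]. }
    unfold Fl. destruct (Rlt_dec 0 x); [|lra].
    assert (E : is_derive (fun t => exp (- / t)) x (exp (- / x) * (/ x * / x))).
    { auto_derive. lra. field. lra. }
    generalize (is_derive_mult P (fun t => exp (- / t)) x _ _ (D0 x Hp) E ltac:(intros; apply Rmult_comm)).
    intro H. replace ((Q0 x + P x * (/ x * / x)) * exp (- / x)) with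
      (Q0 x * exp (- / x) + P x * (exp (- / x) * (/ x * / x))) by ring. exact H.
Qed.

Lemma Fl_smooth n P : pinv P -> Cn n (Fl P).
Proof.
  revert P. induction n; intros P HP. apply Cn_0.
  destruct (Fl_deriv P HP) as [Q [HQ D]]. apply Cn_S.
  intro x. eexists. apply D.
  apply Cn_ext with (Fl Q). intro x. symmetry. apply is_derive_unique. apply D.
  apply IHn. auto.
Qed.

Definition psi := Fl (fun _ => 1).

Lemma psi_smooth n : Cn n psi.
Proof. apply Fl_smooth. constructor. Qed.

Lemma psi_pos x : 0 < x -> psi x = exp (- / x).
Proof. intros H. unfold psi, Fl. destruct (Rlt_dec 0 x); [ring|lra]. Qed.

Lemma psi_npos x : x <= 0 -> psi x = 0.
Proof. intros H. unfold psi, Fl. destruct (Rlt_dec 0 x); [lra|auto]. Qed.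

Lemma psi_ge0 x : 0 <= psi x.
Proof. destruct (Rle_lt_dec x 0). rewrite psi_npos; lra. rewrite psi_pos; auto. left; apply exp_pos. Qed.

Open Scope R_scope.
Definition fpoly (r : R) : R :=
  (5/1024) + (23/256) * r + (-225/1024) * r ^ 2 + (-23/192) * r ^ 3 + (671/1536) * r ^ 4 + (161/640) * r ^ 5 + (-479/1536) * r ^ 6 + (-23/192) * r ^ 7 + (161/1024) * r ^ 8 + (23/256) * r ^ 9 + (-69/1024) * r ^ 10.
Lemma fpoly_pos r : 0 <= r <= 1 -> 0 < fpoly r.
Proof.
  intros Hr. unfold fpoly.
  destruct (Rle_lt_dec r (1/8)).
  { assert ((0) <= r <= (1/8)) by lra. assert ((0) ^ 2 <= r ^ 2 <= (1/8) ^ 2) by (split; apply pow_incr; lra). assert ((0) ^ 3 <= r ^ 3 <= (1/8) ^ 3) by (split; apply pow_incr; lra). assert ((0) ^ 4 <= r ^ 4 <= (1/8) ^ 4) by (split; apply pow_incr; lra). assert ((0) ^ 5 <= r ^ 5 <= (1/8) ^ 5) by (split; apply pow_incr; lra). assert ((0) ^ 6 <= r ^ 6 <= (1/8) ^ 6) by (split; apply pow_incr; lra). assert ((0) ^ 7 <= r ^ 7 <= (1/8) ^ 7) by (split; apply pow_incr; lra). assert ((0) ^ 8 <= r ^ 8 <= (1/8) ^ 8) by (split; apply pow_incr; lra). assert ((0) ^ 9 <= r ^ 9 <= (1/8) ^ 9) by (split; apply pow_incr; lra). assert ((0) ^ 10 <= r ^ 10 <= (1/8) ^ 10) by (split; apply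 pow_incr; lra). lra. }
  destruct (Rle_lt_dec r (1/4)).
  { assert ((1/8) <= r <= (1/4)) by lra. assert ((1/8) ^ 2 <= r ^ 2 <= (1/4) ^ 2) by (split; apply pow_incr; lra). assert ((1/8) ^ 3 <= r ^ 3 <= (1/4) ^ 3) by (split; apply pow_incr; lra). assert ((1/8) ^ 4 <= r ^ 4 <= (1/4) ^ 4) by (split; apply pow_incr; lra). assert ((1/8) ^ 5 <= r ^ 5 <= (1/4) ^ 5) by (split; apply pow_incr; lra). assert ((1/8) ^ 6 <= r ^ 6 <= (1/4) ^ 6) by (split; apply pow_incr; lra). assert ((1/8) ^ 7 <= r ^ 7 <= (1/4) ^ 7) by (split; apply pow_incr; lra). assert ((1/8) ^ 8 <= r ^ 8 <= (1/4) ^ 8) by (split; apply pow_incr; lra). assert ((1/8) ^ 9 <= r ^ 9 <= (1/4) ^ 9) by (split; apply pow_incr; lra). assert ((1/8) ^ 10 <= r ^ 10 <= (1/4) ^ 10) by (split; apply pow_incr; lra). lra. }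
  destruct (Rle_lt_dec r (5/16)).
  { assert ((1/4) <= r <= (5/16)) by lra. assert ((1/4) ^ 2 <= r ^ 2 <= (5/16) ^ 2) by (split; apply pow_incr; lra). assert ((1/4) ^ 3 <= r ^ 3 <= (5/16) ^ 3) by (split; apply pow_incr; lra). assert ((1/4) ^ 4 <= r ^ 4 <= (5/16) ^ 4) by (split; apply pow_incr; lra). assert ((1/4) ^ 5 <= r ^ 5 <= (5/16) ^ 5) by (split; apply pow_incr; lra). assert ((1/4) ^ 6 <= r ^ 6 <= (5/16) ^ 6) by (split; apply pow_incr; lra). assert ((1/4) ^ 7 <= r ^ 7 <= (5/16) ^ 7) by (split; apply pow_incr; lra). assert ((1/4) ^ 8 <= r ^ 8 <= (5/16) ^ 8) by (split; apply pow_incr; lra). assert ((1/4) ^ 9 <= r ^ 9 <= (5/16) ^ 9) by (split; apply pow_incr; lra). assert ((1/4) ^ 10 <= r ^ 10 <= (5/16) ^ 10) by (split; apply pow_incr; lra). lra. }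
  destruct (Rle_lt_dec r (11/32)).
  { assert ((5/16) <= r <= (11/32)) by lra. assert ((5/16) ^ 2 <= r ^ 2 <= (11/32) ^ 2) by (split; apply pow_incr; lra). assert ((5/16) ^ 3 <= r ^ 3 <= (11/32) ^ 3) by (split; apply pow_incr; lra). assert ((5/16) ^ 4 <= r ^ 4 <= (11/32) ^ 4) by (split; apply pow_incr; lra). assert ((5/16) ^ 5 <= r ^ 5 <= (11/32) ^ 5) by (split; apply pow_incr; lra). assert ((5/16) ^ 6 <= r ^ 6 <= (11/32) ^ 6) by (split; apply pow_incr; lra). assert ((5/16) ^ 7 <= r ^ 7 <= (11/32) ^ 7) by (split; apply pow_incr; lra). assert ((5/16) ^ 8 <= r ^ 8 <= (11/32) ^ 8) by (split; apply pow_incr; lra). assert ((5/16) ^ 9 <= r ^ 9 <= (11/32) ^ 9) by (split; apply pow_incr; lra). assert ((5/16) ^ 10 <= r ^ 10 <= (11/32) ^ 10) by (split; apply pow_incr; lra). lra. }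
  destruct (Rle_lt_dec r (3/8)).
  { assert ((11/32) <= r <= (3/8)) by lra. assert ((11/32) ^ 2 <= r ^ 2 <= (3/8) ^ 2) by (split; apply pow_incr; lra). assert ((11/32) ^ 3 <= r ^ 3 <= (3/8) ^ 3) by (split; apply pow_incr; lra). assert ((11/32) ^ 4 <= r ^ 4 <= (3/8) ^ 4) by (split; apply pow_incr; lra). assert ((11/32) ^ 5 <= r ^ 5 <= (3/8) ^ 5) by (split; apply pow_incr; lra). assert ((11/32) ^ 6 <= r ^ 6 <= (3/8) ^ 6) by (split; apply pow_incr; lra). assert ((11/32) ^ 7 <= r ^ 7 <= (3/8) ^ 7) by (split; apply pow_incr; lra). assert ((11/32) ^ 8 <= r ^ 8 <= (3/8) ^ 8) by (split; apply pow_incr; lra). assert ((11/32) ^ 9 <= r ^ 9 <= (3/8) ^ 9) by (split; apply pow_incr; lra). assert ((11/32) ^ 10 <= r ^ 10 <= (3/8) ^ 10) by (split; apply pow_incr; lra). lra. }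
  destruct (Rle_lt_dec r (13/32)).
  { assert ((3/8) <= r <= (13/32)) by lra. assert ((3/8) ^ 2 <= r ^ 2 <= (13/32) ^ 2) by (split; apply pow_incr; lra). assert ((3/8) ^ 3 <= r ^ 3 <= (13/32) ^ 3) by (split; apply pow_incr; lra). assert ((3/8) ^ 4 <= r ^ 4 <= (13/32) ^ 4) by (split; apply pow_incr; lra). assert ((3/8) ^ 5 <= r ^ 5 <= (13/32) ^ 5) by (split; apply pow_incr; lra). assert ((3/8) ^ 6 <= r ^ 6 <= (13/32) ^ 6) by (split; apply pow_incr; lra). assert ((3/8) ^ 7 <= r ^ 7 <= (13/32) ^ 7) by (split; apply pow_incr; lra). assert ((3/8) ^ 8 <= r ^ 8 <= (13/32) ^ 8) by (split; apply pow_incr; lra). assert ((3/8) ^ 9 <= r ^ 9 <= (13/32) ^ 9) by (split; apply pow_incr; lra). assert ((3/8) ^ 10 <= r ^ 10 <= (13/32) ^ 10) by (split; apply pow_incr; lra). lra. }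
  destruct (Rle_lt_dec r (7/16)).
  { assert ((13/32) <= r <= (7/16)) by lra. assert ((13/32) ^ 2 <= r ^ 2 <= (7/16) ^ 2) by (split; apply pow_incr; lra). assert ((13/32) ^ 3 <= r ^ 3 <= (7/16) ^ 3) by (split; apply pow_incr; lra). assert ((13/32) ^ 4 <= r ^ 4 <= (7/16) ^ 4) by (split; apply pow_incr; lra). assert ((13/32) ^ 5 <= r ^ 5 <= (7/16) ^ 5) by (split; apply pow_incr; lra). assert ((13/32) ^ 6 <= r ^ 6 <= (7/16) ^ 6) by (split; apply pow_incr; lra). assert ((13/32) ^ 7 <= r ^ 7 <= (7/16) ^ 7) by (split; apply pow_incr; lra). assert ((13/32) ^ 8 <= r ^ 8 <= (7/16) ^ 8) by (split; apply pow_incr; lra). assert ((13/32) ^ 9 <= r ^ 9 <= (7/16) ^ 9) by (split; apply pow_incr; lra). assert ((13/32) ^ 10 <= r ^ 10 <= (7/16) ^ 10) by (split; apply pow_incr; lra). lra. }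
  destruct (Rle_lt_dec r (29/64)).
  { assert ((7/16) <= r <= (29/64)) by lra. assert ((7/16) ^ 2 <= r ^ 2 <= (29/64) ^ 2) by (split; apply pow_incr; lra). assert ((7/16) ^ 3 <= r ^ 3 <= (29/64) ^ 3) by (split; apply pow_incr; lra). assert ((7/16) ^ 4 <= r ^ 4 <= (29/64) ^ 4) by (split; apply pow_incr; lra). assert ((7/16) ^ 5 <= r ^ 5 <= (29/64) ^ 5) by (split; apply pow_incr; lra). assert ((7/16) ^ 6 <= r ^ 6 <= (29/64) ^ 6) by (split; apply pow_incr; lra). assert ((7/16) ^ 7 <= r ^ 7 <= (29/64) ^ 7) by (split; apply pow_incr; lra). assert ((7/16) ^ 8 <= r ^ 8 <= (29/64) ^ 8) by (split; apply pow_incr; lra). assert ((7/16) ^ 9 <= r ^ 9 <= (29/64) ^ 9) by (split; apply pow_incr; lra). assert ((7/16) ^ 10 <= r ^ 10 <= (29/64) ^ 10) by (split; apply pow_incr; lra). lra. }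
  destruct (Rle_lt_dec r (15/32)).
  { assert ((29/64) <= r <= (15/32)) by lra. assert ((29/64) ^ 2 <= r ^ 2 <= (15/32) ^ 2) by (split; apply pow_incr; lra). assert ((29/64) ^ 3 <= r ^ 3 <= (15/32) ^ 3) by (split; apply pow_incr; lra). assert ((29/64) ^ 4 <= r ^ 4 <= (15/32) ^ 4) by (split; apply pow_incr; lra). assert ((29/64) ^ 5 <= r ^ 5 <= (15/32) ^ 5) by (split; apply pow_incr; lra). assert ((29/64) ^ 6 <= r ^ 6 <= (15/32) ^ 6) by (split; apply pow_incr; lra). assert ((29/64) ^ 7 <= r ^ 7 <= (15/32) ^ 7) by (split; apply pow_incr; lra). assert ((29/64) ^ 8 <= r ^ 8 <= (15/32) ^ 8) by (split; apply pow_incr; lra). assert ((29/64) ^ 9 <= r ^ 9 <= (15/32) ^ 9) by (split; apply pow_incr; lra). assert ((29/64) ^ 10 <= r ^ 10 <= (15/32) ^ 10) by (split; apply pow_incr; lra). lra. }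
  destruct (Rle_lt_dec r (31/64)).
  { assert ((15/32) <= r <= (31/64)) by lra. assert ((15/32) ^ 2 <= r ^ 2 <= (31/64) ^ 2) by (split; apply pow_incr; lra). assert ((15/32) ^ 3 <= r ^ 3 <= (31/64) ^ 3) by (split; apply pow_incr; lra). assert ((15/32) ^ 4 <= r ^ 4 <= (31/64) ^ 4) by (split; apply pow_incr; lra). assert ((15/32) ^ 5 <= r ^ 5 <= (31/64) ^ 5) by (split; apply pow_incr; lra). assert ((15/32) ^ 6 <= r ^ 6 <= (31/64) ^ 6) by (split; apply pow_incr; lra). assert ((15/32) ^ 7 <= r ^ 7 <= (31/64) ^ 7) by (split; apply pow_incr; lra). assert ((15/32) ^ 8 <= r ^ 8 <= (31/64) ^ 8) by (split; apply pow_incr; lra). assert ((15/32) ^ 9 <= r ^ 9 <= (31/64) ^ 9) by (split; apply pow_incr; lra). assert ((15/32) ^ 10 <= r ^ 10 <= (31/64) ^ 10) by (split; apply pow_incr; lra). lra. }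
  destruct (Rle_lt_dec r (1/2)).
  { assert ((31/64) <= r <= (1/2)) by lra. assert ((31/64) ^ 2 <= r ^ 2 <= (1/2) ^ 2) by (split; apply pow_incr; lra). assert ((31/64) ^ 3 <= r ^ 3 <= (1/2) ^ 3) by (split; apply pow_incr; lra). assert ((31/64) ^ 4 <= r ^ 4 <= (1/2) ^ 4) by (split; apply pow_incr; lra). assert ((31/64) ^ 5 <= r ^ 5 <= (1/2) ^ 5) by (split; apply pow_incr; lra). assert ((31/64) ^ 6 <= r ^ 6 <= (1/2) ^ 6) by (split; apply pow_incr; lra). assert ((31/64) ^ 7 <= r ^ 7 <= (1/2) ^ 7) by (split; apply pow_incr; lra). assert ((31/64) ^ 8 <= r ^ 8 <= (1/2) ^ 8) by (split; apply pow_incr; lra). assert ((31/64) ^ 9 <= r ^ 9 <= (1/2) ^ 9) by (split; apply pow_incr; lra). assert ((31/64) ^ 10 <= r ^ 10 <= (1/2) ^ 10) by (split; apply pow_incr; lra). lra. }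
  destruct (Rle_lt_dec r (33/64)).
  { assert ((1/2) <= r <= (33/64)) by lra. assert ((1/2) ^ 2 <= r ^ 2 <= (33/64) ^ 2) by (split; apply pow_incr; lra). assert ((1/2) ^ 3 <= r ^ 3 <= (33/64) ^ 3) by (split; apply pow_incr; lra). assert ((1/2) ^ 4 <= r ^ 4 <= (33/64) ^ 4) by (split; apply pow_incr; lra). assert ((1/2) ^ 5 <= r ^ 5 <= (33/64) ^ 5) by (split; apply pow_incr; lra). assert ((1/2) ^ 6 <= r ^ 6 <= (33/64) ^ 6) by (split; apply pow_incr; lra). assert ((1/2) ^ 7 <= r ^ 7 <= (33/64) ^ 7) by (split; apply pow_incr; lra). assert ((1/2) ^ 8 <= r ^ 8 <= (33/64) ^ 8) by (split; apply pow_incr; lra). assert ((1/2) ^ 9 <= r ^ 9 <= (33/64) ^ 9) by (split; apply pow_incr; lra). assert ((1/2) ^ 10 <= r ^ 10 <= (33/64) ^ 10) by (split; apply pow_incr; lra). lra. }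
  destruct (Rle_lt_dec r (17/32)).
  { assert ((33/64) <= r <= (17/32)) by lra. assert ((33/64) ^ 2 <= r ^ 2 <= (17/32) ^ 2) by (split; apply pow_incr; lra). assert ((33/64) ^ 3 <= r ^ 3 <= (17/32) ^ 3) by (split; apply pow_incr; lra). assert ((33/64) ^ 4 <= r ^ 4 <= (17/32) ^ 4) by (split; apply pow_incr; lra). assert ((33/64) ^ 5 <= r ^ 5 <= (17/32) ^ 5) by (split; apply pow_incr; lra). assert ((33/64) ^ 6 <= r ^ 6 <= (17/32) ^ 6) by (split; apply pow_incr; lra). assert ((33/64) ^ 7 <= r ^ 7 <= (17/32) ^ 7) by (split; apply pow_incr; lra). assert ((33/64) ^ 8 <= r ^ 8 <= (17/32) ^ 8) by (split; apply pow_incr; lra). assert ((33/64) ^ 9 <= r ^ 9 <= (17/32) ^ 9) by (split; apply pow_incr; lra). assert ((33/64) ^ 10 <= r ^ 10 <= (17/32) ^ 10) by (split; apply pow_incr; lra). lra. }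
  destruct (Rle_lt_dec r (35/64)).
  { assert ((17/32) <= r <= (35/64)) by lra. assert ((17/32) ^ 2 <= r ^ 2 <= (35/64) ^ 2) by (split; apply pow_incr; lra). assert ((17/32) ^ 3 <= r ^ 3 <= (35/64) ^ 3) by (split; apply pow_incr; lra). assert ((17/32) ^ 4 <= r ^ 4 <= (35/64) ^ 4) by (split; apply pow_incr; lra). assert ((17/32) ^ 5 <= r ^ 5 <= (35/64) ^ 5) by (split; apply pow_incr; lra). assert ((17/32) ^ 6 <= r ^ 6 <= (35/64) ^ 6) by (split; apply pow_incr; lra). assert ((17/32) ^ 7 <= r ^ 7 <= (35/64) ^ 7) by (split; apply pow_incr; lra). assert ((17/32) ^ 8 <= r ^ 8 <= (35/64) ^ 8) by (split; apply pow_incr; lra). assert ((17/32) ^ 9 <= r ^ 9 <= (35/64) ^ 9) by (split; apply pow_incr; lra). assert ((17/32) ^ 10 <= r ^ 10 <= (35/64) ^ 10) by (split; apply pow_incr; lra). lra. }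
  destruct (Rle_lt_dec r (9/16)).
  { assert ((35/64) <= r <= (9/16)) by lra. assert ((35/64) ^ 2 <= r ^ 2 <= (9/16) ^ 2) by (split; apply pow_incr; lra). assert ((35/64) ^ 3 <= r ^ 3 <= (9/16) ^ 3) by (split; apply pow_incr; lra). assert ((35/64) ^ 4 <= r ^ 4 <= (9/16) ^ 4) by (split; apply pow_incr; lra). assert ((35/64) ^ 5 <= r ^ 5 <= (9/16) ^ 5) by (split; apply pow_incr; lra). assert ((35/64) ^ 6 <= r ^ 6 <= (9/16) ^ 6) by (split; apply pow_incr; lra). assert ((35/64) ^ 7 <= r ^ 7 <= (9/16) ^ 7) by (split; apply pow_incr; lra). assert ((35/64) ^ 8 <= r ^ 8 <= (9/16) ^ 8) by (split; apply pow_incr; lra). assert ((35/64) ^ 9 <= r ^ 9 <= (9/16) ^ 9) by (split; apply pow_incr; lra). assert ((35/64) ^ 10 <= r ^ 10 <= (9/16) ^ 10) by (split; apply pow_incr; lra). lra. }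
  destruct (Rle_lt_dec r (37/64)).
  { assert ((9/16) <= r <= (37/64)) by lra. assert ((9/16) ^ 2 <= r ^ 2 <= (37/64) ^ 2) by (split; apply pow_incr; lra). assert ((9/16) ^ 3 <= r ^ 3 <= (37/64) ^ 3) by (split; apply pow_incr; lra). assert ((9/16) ^ 4 <= r ^ 4 <= (37/64) ^ 4) by (split; apply pow_incr; lra). assert ((9/16) ^ 5 <= r ^ 5 <= (37/64) ^ 5) by (split; apply pow_incr; lra). assert ((9/16) ^ 6 <= r ^ 6 <= (37/64) ^ 6) by (split; apply pow_incr; lra). assert ((9/16) ^ 7 <= r ^ 7 <= (37/64) ^ 7) by (split; apply pow_incr; lra). assert ((9/16) ^ 8 <= r ^ 8 <= (37/64) ^ 8) by (split; apply pow_incr; lra). assert ((9/16) ^ 9 <= r ^ 9 <= (37/64) ^ 9) by (split; apply pow_incr; lra). assert ((9/16) ^ 10 <= r ^ 10 <= (37/64) ^ 10) by (split; apply pow_incr; lra). lra. }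
  destruct (Rle_lt_dec r (19/32)).
  { assert ((37/64) <= r <= (19/32)) by lra. assert ((37/64) ^ 2 <= r ^ 2 <= (19/32) ^ 2) by (split; apply pow_incr; lra). assert ((37/64) ^ 3 <= r ^ 3 <= (19/32) ^ 3) by (split; apply pow_incr; lra). assert ((37/64) ^ 4 <= r ^ 4 <= (19/32) ^ 4) by (split; apply pow_incr; lra). assert ((37/64) ^ 5 <= r ^ 5 <= (19/32) ^ 5) by (split; apply pow_incr; lra). assert ((37/64) ^ 6 <= r ^ 6 <= (19/32) ^ 6) by (split; apply pow_incr; lra). assert ((37/64) ^ 7 <= r ^ 7 <= (19/32) ^ 7) by (split; apply pow_incr; lra). assert ((37/64) ^ 8 <= r ^ 8 <= (19/32) ^ 8) by (split; apply pow_incr; lra). assert ((37/64) ^ 9 <= r ^ 9 <= (19/32) ^ 9) by (split; apply pow_incr; lra). assert ((37/64) ^ 10 <= r ^ 10 <= (19/32) ^ 10) by (split; apply pow_incr; lra). lra. }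
  destruct (Rle_lt_dec r (39/64)).
  { assert ((19/32) <= r <= (39/64)) by lra. assert ((19/32) ^ 2 <= r ^ 2 <= (39/64) ^ 2) by (split; apply pow_incr; lra). assert ((19/32) ^ 3 <= r ^ 3 <= (39/64) ^ 3) by (split; apply pow_incr; lra). assert ((19/32) ^ 4 <= r ^ 4 <= (39/64) ^ 4) by (split; apply pow_incr; lra). assert ((19/32) ^ 5 <= r ^ 5 <= (39/64) ^ 5) by (split; apply pow_incr; lra). assert ((19/32) ^ 6 <= r ^ 6 <= (39/64) ^ 6) by (split; apply pow_incr; lra). assert ((19/32) ^ 7 <= r ^ 7 <= (39/64) ^ 7) by (split; apply pow_incr; lra). assert ((19/32) ^ 8 <= r ^ 8 <= (39/64) ^ 8) by (split; apply pow_incr; lra). assert ((19/32) ^ 9 <= r ^ 9 <= (39/64) ^ 9) by (split; apply pow_incr; lra). assert ((19/32) ^ 10 <= r ^ 10 <= (39/64) ^ 10) by (split; apply pow_incr; lra). lra. }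
  destruct (Rle_lt_dec r (5/8)).
  { assert ((39/64) <= r <= (5/8)) by lra. assert ((39/64) ^ 2 <= r ^ 2 <= (5/8) ^ 2) by (split; apply pow_incr; lra). assert ((39/64) ^ 3 <= r ^ 3 <= (5/8) ^ 3) by (split; apply pow_incr; lra). assert ((39/64) ^ 4 <= r ^ 4 <= (5/8) ^ 4) by (split; apply pow_incr; lra). assert ((39/64) ^ 5 <= r ^ 5 <= (5/8) ^ 5) by (split; apply pow_incr; lra). assert ((39/64) ^ 6 <= r ^ 6 <= (5/8) ^ 6) by (split; apply pow_incr; lra). assert ((39/64) ^ 7 <= r ^ 7 <= (5/8) ^ 7) by (split; apply pow_incr; lra). assert ((39/64) ^ 8 <= r ^ 8 <= (5/8) ^ 8) by (split; apply pow_incr; lra). assert ((39/64) ^ 9 <= r ^ 9 <= (5/8) ^ 9) by (split; apply pow_incr; lra). assert ((39/64) ^ 10 <= r ^ 10 <= (5/8) ^ 10) by (split; apply pow_incr; lra). lra. }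
  destruct (Rle_lt_dec r (41/64)).
  { assert ((5/8) <= r <= (41/64)) by lra. assert ((5/8) ^ 2 <= r ^ 2 <= (41/64) ^ 2) by (split; apply pow_incr; lra). assert ((5/8) ^ 3 <= r ^ 3 <= (41/64) ^ 3) by (split; apply pow_incr; lra). assert ((5/8) ^ 4 <= r ^ 4 <= (41/64) ^ 4) by (split; apply pow_incr; lra). assert ((5/8) ^ 5 <= r ^ 5 <= (41/64) ^ 5) by (split; apply pow_incr; lra). assert ((5/8) ^ 6 <= r ^ 6 <= (41/64) ^ 6) by (split; apply pow_incr; lra). assert ((5/8) ^ 7 <= r ^ 7 <= (41/64) ^ 7) by (split; apply pow_incr; lra). assert ((5/8) ^ 8 <= r ^ 8 <= (41/64) ^ 8) by (split; apply pow_incr; lra). assert ((5/8) ^ 9 <= r ^ 9 <= (41/64) ^ 9) by (split; apply pow_incr; lra). assert ((5/8) ^ 10 <= r ^ 10 <= (41/64) ^ 10) by (split; apply pow_incr; lra). lra. }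
  destruct (Rle_lt_dec r (21/32)).
  { assert ((41/64) <= r <= (21/32)) by lra. assert ((41/64) ^ 2 <= r ^ 2 <= (21/32) ^ 2) by (split; apply pow_incr; lra). assert ((41/64) ^ 3 <= r ^ 3 <= (21/32) ^ 3) by (split; apply pow_incr; lra). assert ((41/64) ^ 4 <= r ^ 4 <= (21/32) ^ 4) by (split; apply pow_incr; lra). assert ((41/64) ^ 5 <= r ^ 5 <= (21/32) ^ 5) by (split; apply pow_incr; lra). assert ((41/64) ^ 6 <= r ^ 6 <= (21/32) ^ 6) by (split; apply pow_incr; lra). assert ((41/64) ^ 7 <= r ^ 7 <= (21/32) ^ 7) by (split; apply pow_incr; lra). assert ((41/64) ^ 8 <= r ^ 8 <= (21/32) ^ 8) by (split; apply pow_incr; lra). assert ((41/64) ^ 9 <= r ^ 9 <= (21/32) ^ 9) by (split; apply pow_incr; lra). assert ((41/64) ^ 10 <= r ^ 10 <= (21/32) ^ 10) by (split; apply pow_incr; lra). lra. }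
  destruct (Rle_lt_dec r (43/64)).
  { assert ((21/32) <= r <= (43/64)) by lra. assert ((21/32) ^ 2 <= r ^ 2 <= (43/64) ^ 2) by (split; apply pow_incr; lra). assert ((21/32) ^ 3 <= r ^ 3 <= (43/64) ^ 3) by (split; apply pow_incr; lra). assert ((21/32) ^ 4 <= r ^ 4 <= (43/64) ^ 4) by (split; apply pow_incr; lra). assert ((21/32) ^ 5 <= r ^ 5 <= (43/64) ^ 5) by (split; apply pow_incr; lra). assert ((21/32) ^ 6 <= r ^ 6 <= (43/64) ^ 6) by (split; apply pow_incr; lra). assert ((21/32) ^ 7 <= r ^ 7 <= (43/64) ^ 7) by (split; apply pow_incr; lra). assert ((21/32) ^ 8 <= r ^ 8 <= (43/64) ^ 8) by (split; apply pow_incr; lra). assert ((21/32) ^ 9 <= r ^ 9 <= (43/64) ^ 9) by (split; apply pow_incr; lra). assert ((21/32) ^ 10 <= r ^ 10 <= (43/64) ^ 10) by (split; apply pow_incr; lra). lra. }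
  destruct (Rle_lt_dec r (11/16)).
  { assert ((43/64) <= r <= (11/16)) by lra. assert ((43/64) ^ 2 <= r ^ 2 <= (11/16) ^ 2) by (split; apply pow_incr; lra). assert ((43/64) ^ 3 <= r ^ 3 <= (11/16) ^ 3) by (split; apply pow_incr; lra). assert ((43/64) ^ 4 <= r ^ 4 <= (11/16) ^ 4) by (split; apply pow_incr; lra). assert ((43/64) ^ 5 <= r ^ 5 <= (11/16) ^ 5) by (split; apply pow_incr; lra). assert ((43/64) ^ 6 <= r ^ 6 <= (11/16) ^ 6) by (split; apply pow_incr; lra). assert ((43/64) ^ 7 <= r ^ 7 <= (11/16) ^ 7) by (split; apply pow_incr; lra). assert ((43/64) ^ 8 <= r ^ 8 <= (11/16) ^ 8) by (split; apply pow_incr; lra). assert ((43/64) ^ 9 <= r ^ 9 <= (11/16) ^ 9) by (split; apply pow_incr; lra). assert ((43/64) ^ 10 <= r ^ 10 <= (11/16) ^ 10) by (split; apply pow_incr; lra). lra. }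
  destruct (Rle_lt_dec r (45/64)).
  { assert ((11/16) <= r <= (45/64)) by lra. assert ((11/16) ^ 2 <= r ^ 2 <= (45/64) ^ 2) by (split; apply pow_incr; lra). assert ((11/16) ^ 3 <= r ^ 3 <= (45/64) ^ 3) by (split; apply pow_incr; lra). assert ((11/16) ^ 4 <= r ^ 4 <= (45/64) ^ 4) by (split; apply pow_incr; lra). assert ((11/16) ^ 5 <= r ^ 5 <= (45/64) ^ 5) by (split; apply pow_incr; lra). assert ((11/16) ^ 6 <= r ^ 6 <= (45/64) ^ 6) by (split; apply pow_incr; lra). assert ((11/16) ^ 7 <= r ^ 7 <= (45/64) ^ 7) by (split; apply pow_incr; lra). assert ((11/16) ^ 8 <= r ^ 8 <= (45/64) ^ 8) by (split; apply pow_incr; lra). assert ((11/16) ^ 9 <= r ^ 9 <= (45/64) ^ 9) by (split; apply pow_incr; lra). assert ((11/16) ^ 10 <= r ^ 10 <= (45/64) ^ 10) by (split; apply pow_incr; lra). lra. }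
  destruct (Rle_lt_dec r (23/32)).
  { assert ((45/64) <= r <= (23/32)) by lra. assert ((45/64) ^ 2 <= r ^ 2 <= (23/32) ^ 2) by (split; apply pow_incr; lra). assert ((45/64) ^ 3 <= r ^ 3 <= (23/32) ^ 3) by (split; apply pow_incr; lra). assert ((45/64) ^ 4 <= r ^ 4 <= (23/32) ^ 4) by (split; apply pow_incr; lra). assert ((45/64) ^ 5 <= r ^ 5 <= (23/32) ^ 5) by (split; apply pow_incr; lra). assert ((45/64) ^ 6 <= r ^ 6 <= (23/32) ^ 6) by (split; apply pow_incr; lra). assert ((45/64) ^ 7 <= r ^ 7 <= (23/32) ^ 7) by (split; apply pow_incr; lra). assert ((45/64) ^ 8 <= r ^ 8 <= (23/32) ^ 8) by (split; apply pow_incr; lra). assert ((45/64) ^ 9 <= r ^ 9 <= (23/32) ^ 9) by (split; apply pow_incr; lra). assert ((45/64) ^ 10 <= r ^ 10 <= (23/32) ^ 10) by (split; apply pow_incr; lra). lra. }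
  destruct (Rle_lt_dec r (3/4)).
  { assert ((23/32) <= r <= (3/4)) by lra. assert ((23/32) ^ 2 <= r ^ 2 <= (3/4) ^ 2) by (split; apply pow_incr; lra). assert ((23/32) ^ 3 <= r ^ 3 <= (3/4) ^ 3) by (split; apply pow_incr; lra). assert ((23/32) ^ 4 <= r ^ 4 <= (3/4) ^ 4) by (split; apply pow_incr; lra). assert ((23/32) ^ 5 <= r ^ 5 <= (3/4) ^ 5) by (split; apply pow_incr; lra). assert ((23/32) ^ 6 <= r ^ 6 <= (3/4) ^ 6) by (split; apply pow_incr; lra). assert ((23/32) ^ 7 <= r ^ 7 <= (3/4) ^ 7) by (split; apply pow_incr; lra). assert ((23/32) ^ 8 <= r ^ 8 <= (3/4) ^ 8) by (split; apply pow_incr; lra). assert ((23/32) ^ 9 <= r ^ 9 <= (3/4) ^ 9) by (split; apply pow_incr; lra). assert ((23/32) ^ 10 <= r ^ 10 <= (3/4) ^ 10) by (split; apply pow_incr; lra). lra. }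
  destruct (Rle_lt_dec r (25/32)).
  { assert ((3/4) <= r <= (25/32)) by lra. assert ((3/4) ^ 2 <= r ^ 2 <= (25/32) ^ 2) by (split; apply pow_incr; lra). assert ((3/4) ^ 3 <= r ^ 3 <= (25/32) ^ 3) by (split; apply pow_incr; lra). assert ((3/4) ^ 4 <= r ^ 4 <= (25/32) ^ 4) by (split; apply pow_incr; lra). assert ((3/4) ^ 5 <= r ^ 5 <= (25/32) ^ 5) by (split; apply pow_incr; lra). assert ((3/4) ^ 6 <= r ^ 6 <= (25/32) ^ 6) by (split; apply pow_incr; lra). assert ((3/4) ^ 7 <= r ^ 7 <= (25/32) ^ 7) by (split; apply pow_incr; lra). assert ((3/4) ^ 8 <= r ^ 8 <= (25/32) ^ 8) by (split; apply pow_incr; lra). assert ((3/4) ^ 9 <= r ^ 9 <= (25/32) ^ 9) by (split; apply pow_incr; lra). assert ((3/4) ^ 10 <= r ^ 10 <= (25/32) ^ 10) by (split; apply pow_incr; lra). lra. }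
  destruct (Rle_lt_dec r (13/16)).
  { assert ((25/32) <= r <= (13/16)) by lra. assert ((25/32) ^ 2 <= r ^ 2 <= (13/16) ^ 2) by (split; apply pow_incr; lra). assert ((25/32) ^ 3 <= r ^ 3 <= (13/16) ^ 3) by (split; apply pow_incr; lra). assert ((25/32) ^ 4 <= r ^ 4 <= (13/16) ^ 4) by (split; apply pow_incr; lra). assert ((25/32) ^ 5 <= r ^ 5 <= (13/16) ^ 5) by (split; apply pow_incr; lra). assert ((25/32) ^ 6 <= r ^ 6 <= (13/16) ^ 6) by (split; apply pow_incr; lra). assert ((25/32) ^ 7 <= r ^ 7 <= (13/16) ^ 7) by (split; apply pow_incr; lra). assert ((25/32) ^ 8 <= r ^ 8 <= (13/16) ^ 8) by (split; apply pow_incr; lra). assert ((25/32) ^ 9 <= r ^ 9 <= (13/16) ^ 9) by (split; apply pow_incr; lra). assert ((25/32) ^ 10 <= r ^ 10 <= (13/16) ^ 10) by (split; apply pow_incr; lra). lra. }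
  destruct (Rle_lt_dec r (27/32)).
  { assert ((13/16) <= r <= (27/32)) by lra. assert ((13/16) ^ 2 <= r ^ 2 <= (27/32) ^ 2) by (split; apply pow_incr; lra). assert ((13/16) ^ 3 <= r ^ 3 <= (27/32) ^ 3) by (split; apply pow_incr; lra). assert ((13/16) ^ 4 <= r ^ 4 <= (27/32) ^ 4) by (split; apply pow_incr; lra). assert ((13/16) ^ 5 <= r ^ 5 <= (27/32) ^ 5) by (split; apply pow_incr; lra). assert ((13/16) ^ 6 <= r ^ 6 <= (27/32) ^ 6) by (split; apply pow_incr; lra). assert ((13/16) ^ 7 <= r ^ 7 <= (27/32) ^ 7) by (split; apply pow_incr; lra). assert ((13/16) ^ 8 <= r ^ 8 <= (27/32) ^ 8) by (split; apply pow_incr; lra). assert ((13/16) ^ 9 <= r ^ 9 <= (27/32) ^ 9) by (split; apply pow_incr; lra). assert ((13/16) ^ 10 <= r ^ 10 <= (27/32) ^ 10) by (split; apply pow_incr; lra). lra. }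
  destruct (Rle_lt_dec r (7/8)).
  { assert ((27/32) <= r <= (7/8)) by lra. assert ((27/32) ^ 2 <= r ^ 2 <= (7/8) ^ 2) by (split; apply pow_incr; lra). assert ((27/32) ^ 3 <= r ^ 3 <= (7/8) ^ 3) by (split; apply pow_incr; lra). assert ((27/32) ^ 4 <= r ^ 4 <= (7/8) ^ 4) by (split; apply pow_incr; lra). assert ((27/32) ^ 5 <= r ^ 5 <= (7/8) ^ 5) by (split; apply pow_incr; lra). assert ((27/32) ^ 6 <= r ^ 6 <= (7/8) ^ 6) by (split; apply pow_incr; lra). assert ((27/32) ^ 7 <= r ^ 7 <= (7/8) ^ 7) by (split; apply pow_incr; lra). assert ((27/32) ^ 8 <= r ^ 8 <= (7/8) ^ 8) by (split; apply pow_incr; lra). assert ((27/32) ^ 9 <= r ^ 9 <= (7/8) ^ 9) by (split; apply pow_incr; lra). assert ((27/32) ^ 10 <= r ^ 10 <= (7/8) ^ 10) by (split; apply pow_incr; lra). lra. }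
  destruct (Rle_lt_dec r (29/32)).
  { assert ((7/8) <= r <= (29/32)) by lra. assert ((7/8) ^ 2 <= r ^ 2 <= (29/32) ^ 2) by (split; apply pow_incr; lra). assert ((7/8) ^ 3 <= r ^ 3 <= (29/32) ^ 3) by (split; apply pow_incr; lra). assert ((7/8) ^ 4 <= r ^ 4 <= (29/32) ^ 4) by (split; apply pow_incr; lra). assert ((7/8) ^ 5 <= r ^ 5 <= (29/32) ^ 5) by (split; apply pow_incr; lra). assert ((7/8) ^ 6 <= r ^ 6 <= (29/32) ^ 6) by (split; apply pow_incr; lra). assert ((7/8) ^ 7 <= r ^ 7 <= (29/32) ^ 7) by (split; apply pow_incr; lra). assert ((7/8) ^ 8 <= r ^ 8 <= (29/32) ^ 8) by (split; apply pow_incr; lra). assert ((7/8) ^ 9 <= r ^ 9 <= (29/32) ^ 9) by (split; apply pow_incr; lra). assert ((7/8) ^ 10 <= r ^ 10 <= (29/32) ^ 10) by (split; apply pow_incr; lra). lra. }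
  destruct (Rle_lt_dec r (15/16)).
  { assert ((29/32) <= r <= (15/16)) by lra. assert ((29/32) ^ 2 <= r ^ 2 <= (15/16) ^ 2) by (split; apply pow_incr; lra). assert ((29/32) ^ 3 <= r ^ 3 <= (15/16) ^ 3) by (split; apply pow_incr; lra). assert ((29/32) ^ 4 <= r ^ 4 <= (15/16) ^ 4) by (split; apply pow_incr; lra). assert ((29/32) ^ 5 <= r ^ 5 <= (15/16) ^ 5) by (split; apply pow_incr; lra). assert ((29/32) ^ 6 <= r ^ 6 <= (15/16) ^ 6) by (split; apply pow_incr; lra). assert ((29/32) ^ 7 <= r ^ 7 <= (15/16) ^ 7) by (split; apply pow_incr; lra). assert ((29/32) ^ 8 <= r ^ 8 <= (15/16) ^ 8) by (split; apply pow_incr; lra). assert ((29/32) ^ 9 <= r ^ 9 <= (15/16) ^ 9) by (split; apply pow_incr; lra). assert ((29/32) ^ 10 <= r ^ 10 <= (15/16) ^ 10) by (split; apply pow_incr; lra). lra. }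
  destruct (Rle_lt_dec r (31/32)).
  { assert ((15/16) <= r <= (31/32)) by lra. assert ((15/16) ^ 2 <= r ^ 2 <= (31/32) ^ 2) by (split; apply pow_incr; lra). assert ((15/16) ^ 3 <= r ^ 3 <= (31/32) ^ 3) by (split; apply pow_incr; lra). assert ((15/16) ^ 4 <= r ^ 4 <= (31/32) ^ 4) by (split; apply pow_incr; lra). assert ((15/16) ^ 5 <= r ^ 5 <= (31/32) ^ 5) by (split; apply pow_incr; lra). assert ((15/16) ^ 6 <= r ^ 6 <= (31/32) ^ 6) by (split; apply pow_incr; lra). assert ((15/16) ^ 7 <= r ^ 7 <= (31/32) ^ 7) by (split; apply pow_incr; lra). assert ((15/16) ^ 8 <= r ^ 8 <= (31/32) ^ 8) by (split; apply pow_incr; lra). assert ((15/16) ^ 9 <= r ^ 9 <= (31/32) ^ 9) by (split; apply pow_incr; lra). assert ((15/16) ^ 10 <= r ^ 10 <= (31/32) ^ 10) by (split; apply pow_incr; lra). lra. }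
  assert ((31/32) <= r <= (1)) by lra. assert ((31/32) ^ 2 <= r ^ 2 <= (1) ^ 2) by (split; apply pow_incr; lra). assert ((31/32) ^ 3 <= r ^ 3 <= (1) ^ 3) by (split; apply pow_incr; lra). assert ((31/32) ^ 4 <= r ^ 4 <= (1) ^ 4) by (split; apply pow_incr; lra). assert ((31/32) ^ 5 <= r ^ 5 <= (1) ^ 5) by (split; apply pow_incr; lra). assert ((31/32) ^ 6 <= r ^ 6 <= (1) ^ 6) by (split; apply pow_incr; lra). assert ((31/32) ^ 7 <= r ^ 7 <= (1) ^ 7) by (split; apply pow_incr; lra). assert ((31/32) ^ 8 <= r ^ 8 <= (1) ^ 8) by (split; apply pow_incr; lra). assert ((31/32) ^ 9 <= r ^ 9 <= (1) ^ 9) by (split; apply pow_incr; lra). assert ((31/32) ^ 10 <= r ^ 10 <= (1) ^ 10) by (split; apply pow_incr; lra). lra.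
Qed.
Definition G s := exp (- / s) / (exp (- / s) + exp (- / (1 - s))).
Definition G1 s := (/ s ^ 2 + / (1 - s) ^ 2) * (exp (- / s) * exp (- / (1 - s))) / (exp (- / s) + exp (- / (1 - s))) ^ 2.
Definition G2 s := exp (- / s) * exp (- / (1 - s)) / (exp (- / s) + exp (- / (1 - s))) ^ 2 *
  ((/ s ^ 2 + / (1 - s) ^ 2) ^ 2 * ((exp (- / (1 - s)) - exp (- / s)) / (exp (- / s) + exp (- / (1 - s))))
   + 2 * / (1 - s) ^ 3 - 2 * / s ^ 3).
Lemma G_d s : 0 < s < 1 -> is_derive G s (G1 s).
Proof.
  intros Hs. unfold G, G1. assert (P1 := exp_pos (- / s)). assert (P2 := exp_pos (- / (1 - s))).
  auto_derive; replace (1 + - s) with (1 - s) by ring. repeat split; lra. field. repeat split; lra.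
Qed.
Lemma G1_d s : 0 < s < 1 -> is_derive G1 s (G2 s).
Proof.
  intros Hs. unfold G1, G2. assert (P1 := exp_pos (- / s)). assert (P2 := exp_pos (- / (1 - s))).
  auto_derive; replace (1 + - s) with (1 - s) by ring. repeat split; try lra; try nra. field. repeat split; lra.
Qed.

Lemma expT5 z : 0 <= z -> 1 + z + z^2/2 + z^3/6 + z^4/24 + z^5/120 <= exp z.
Proof. intros Hz. generalize (exp_ge_taylor z 5 Hz). simpl. lra. Qed.

Lemma key_bound s : 0 < s <= 1/2 -> (/ s ^ 2 + / (1 - s) ^ 2) ^ 2 <= 23 * (2 + exp (/ s - / (1 - s))).
Proof.
  intros Hs. set (z := / s - / (1 - s)).
  assert (Hz : 0 <= z). { unfold z. assert (/ (1 - s) <= / s) by (apply Rinv_le_contravar; lra). lra. }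
  assert (He := expT5 z Hz).
  assert (Hid : 23 * (2 + (1 + z + z^2/2 + z^3/6 + z^4/24 + z^5/120)) - (/ s ^ 2 + / (1 - s) ^ 2) ^ 2
                = fpoly (1 - 2 * s) / (s * (1 - s)) ^ 5).
  { unfold z, fpoly. field. lra. }
  assert (0 < fpoly (1 - 2 * s)) by (apply fpoly_pos; lra).
  assert (0 < fpoly (1 - 2 * s) / (s * (1 - s)) ^ 5).
  { apply Rdiv_lt_0_compat; auto. apply pow_lt. nra. }
  lra.
Qed.

Lemma wbound e1 e2 E A : 0 < e1 -> 0 < E -> e2 = e1 * E -> A ^ 2 <= 23 * (2 + E) ->
  e1 * e2 / (e1 + e2) ^ 2 * A ^ 2 <= 23.
Proof.
  intros H1 HE -> HA.
  replace (e1 * (e1 * E) / (e1 + e1 * E) ^ 2) with (E / (1 + E) ^ 2) by (field; repeat split; nra).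
  assert (E / (1 + E) ^ 2 <= / (2 + E)).
  { apply Rmult_le_reg_r with ((1 + E) ^ 2 * (2 + E)). nra.
    replace (E / (1 + E) ^ 2 * ((1 + E) ^ 2 * (2 + E))) with (E * (2 + E)) by (field; lra).
    replace (/ (2 + E) * ((1 + E) ^ 2 * (2 + E))) with ((1 + E) ^ 2) by (field; lra). nra. }
  assert (0 <= A ^ 2) by (apply pow2_ge_0).
  apply Rle_trans with (/ (2 + E) * A ^ 2). apply Rmult_le_compat_r; auto.
  apply Rmult_le_reg_l with (2 + E). lra.
  replace ((2 + E) * (/ (2 + E) * A ^ 2)) with (A ^ 2) by (field; lra). lra.
Qed.

Definition wf s := exp (- / s) * exp (- / (1 - s)) / (exp (- / s) + exp (- / (1 - s))) ^ 2.
Definition AA s := / s ^ 2 + / (1 - s) ^ 2.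

Lemma wA_bound s : 0 < s < 1 -> wf s * AA s ^ 2 <= 23.
Proof.
  intros Hs. unfold wf, AA. destruct (Rle_lt_dec s (1/2)).
  - apply wbound with (exp (/ s - / (1 - s))). apply exp_pos. apply exp_pos.
    rewrite <- exp_plus. f_equal. ring. apply key_bound. lra.
  - replace (exp (- / s) * exp (- / (1 - s)) / (exp (- / s) + exp (- / (1 - s))) ^ 2)
      with (exp (- / (1 - s)) * exp (- / s) / (exp (- / (1 - s)) + exp (- / s)) ^ 2) by (rewrite (Rplus_comm (exp (- / (1 - s)))), (Rmult_comm (exp (- / (1 - s)))); reflexivity).
    apply wbound with (exp (/ (1 - s) - / s)). apply exp_pos. apply exp_pos.
    rewrite <- exp_plus. f_equal. ring.
    replace (/ s ^ 2 + / (1 - s) ^ 2) with (/ (1 - s) ^ 2 + / (1 - (1 - s)) ^ 2)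
      by (field; repeat split; lra).
    replace (/ (1 - s) - / s) with (/ (1 - s) - / (1 - (1 - s))) by (field; repeat split; lra).
    apply key_bound. lra.
Qed.

Lemma bracket a b t : 1 <= a -> 1 <= b -> -1 <= t <= 1 -> (b <= a -> 0 <= t) -> (a <= b -> t <= 0) ->
  Rabs ((a^2 + b^2)^2 * t + 2 * b^3 - 2 * a^3) <= (a^2+b^2)^2.
Proof.
  intros Ha Hb Ht H1 H2.
  assert (Ka : 2 * a^3 <= (a^2+b^2)^2).
  { assert (0 <= a^2 * (b^2 - 1)) by (apply Rmult_le_pos; nra).
    assert (0 <= a^2 * ((a-1)^2 + 1)) by (apply Rmult_le_pos; nra).
    assert (0 <= b^4) by nra. nra. }
  assert (Kb : 2 * b^3 <= (a^2+b^2)^2).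
  { assert (0 <= b^2 * (a^2 - 1)) by (apply Rmult_le_pos; nra).
    assert (0 <= b^2 * ((b-1)^2 + 1)) by (apply Rmult_le_pos; nra).
    assert (0 <= a^4) by nra. nra. }
  assert (0 <= (a^2+b^2)^2) by nra.
  apply Rabs_le. destruct (Rle_lt_dec b a).
  - assert (b^3 <= a^3) by (apply pow_incr; lra). specialize (H1 r).
    assert (0 <= b^3) by (apply pow_le; lra). nra.
  - assert (a^3 <= b^3) by (apply pow_incr; lra). specialize (H2 (Rlt_le _ _ r)).
    assert (0 <= a^3) by (apply pow_le; lra). nra.
Qed.

Lemma exp_le x y : x <= y -> exp x <= exp y.
Proof. intros [H|H]. left; apply exp_increasing; auto. subst; lra. Qed.

Lemma G2_bound s : 0 < s < 1 -> Rabs (G2 s) <= 23.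
Proof.
  intros Hs. assert (H := wA_bound s Hs).
  assert (P1 := exp_pos (- / s)). assert (P2 := exp_pos (- / (1 - s))).
  set (t := (exp (- / (1 - s)) - exp (- / s)) / (exp (- / s) + exp (- / (1 - s)))).
  assert (G2 s = wf s * ((/ s ^ 2 + / (1 - s) ^ 2) ^ 2 * t + 2 * / (1 - s) ^ 3 - 2 * / s ^ 3)) by reflexivity.
  rewrite H0. rewrite Rabs_mult.
  assert (Hw : 0 <= wf s). { unfold wf. apply Rle_mult_inv_pos. nra. apply pow_lt. lra. }
  rewrite (Rabs_right (wf s)) by lra.
  assert (Ha : 1 <= / s) by (rewrite <- Rinv_1; apply Rinv_le_contravar; lra).
  assert (Hb : 1 <= / (1 - s)) by (rewrite <- Rinv_1; apply Rinv_le_contravar; lra).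
  assert (Hbr := bracket (/ s) (/ (1 - s)) t Ha Hb).
  rewrite !pow_inv in Hbr.
  assert (Rabs ((/ s ^ 2 + / (1 - s) ^ 2) ^ 2 * t + 2 * / (1 - s) ^ 3 - 2 * / s ^ 3) <= AA s ^ 2).
  { apply Hbr.
    - unfold t. split.
      apply Rmult_le_reg_r with (exp (- / s) + exp (- / (1 - s))). lra. unfold Rdiv. rewrite Rmult_assoc, Rinv_l; lra.
      apply Rmult_le_reg_r with (exp (- / s) + exp (- / (1 - s))). lra. unfold Rdiv. rewrite Rmult_assoc, Rinv_l; lra.
    - intros Hab. unfold t. apply Rle_mult_inv_pos; [|lra].
      assert (exp (- / s) <= exp (- / (1 - s))) by (apply exp_le; lra).
      lra.
    - intros Hab. unfold t. unfold Rdiv. apply Rmult_le_0_r; [|left; apply Rinv_0_lt_compat; lra].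
      assert (exp (- / (1 - s)) <= exp (- / s)) by (apply exp_le; lra).
      lra. }
  apply Rle_trans with (wf s * AA s ^ 2); auto. apply Rmult_le_compat_l; auto.
Qed.

Lemma G1_bound s : 0 < s < 1 -> Rabs (G1 s) <= 23.
Proof.
  intros Hs. assert (H := wA_bound s Hs).
  assert (P1 := exp_pos (- / s)). assert (P2 := exp_pos (- / (1 - s))).
  assert (G1 s = wf s * AA s) by (unfold G1, wf, AA; field; lra). rewrite H0.
  assert (Hw : 0 <= wf s). { unfold wf. apply Rle_mult_inv_pos. nra. apply pow_lt. lra. }
  assert (Ha : 1 <= / s) by (rewrite <- Rinv_1; apply Rinv_le_contravar; lra).
  assert (1 <= AA s). { unfold AA. rewrite <- !pow_inv. nra. }
  rewrite Rabs_right. 2: { apply Rle_ge. apply Rmult_le_pos; lra. }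
  apply Rle_trans with (wf s * AA s ^ 2); auto. apply Rmult_le_compat_l; auto. nra.
Qed.

Definition phi s := psi s * / (psi s + psi (1 - s)).

Lemma den_pos s : 0 < psi s + psi (1 - s).
Proof.
  destruct (Rle_lt_dec s 0).
  - rewrite (psi_pos (1 - s)) by lra. assert (0 < exp (- / (1 - s))) by apply exp_pos. generalize (psi_ge0 s). lra.
  - rewrite (psi_pos s) by lra. assert (0 < exp (- / s)) by apply exp_pos. generalize (psi_ge0 (1 - s)). lra.
Qed.

Lemma phi_smooth n : Cn n phi.
Proof.
  unfold phi. apply Cn_mult. apply psi_smooth. apply Cn_inv.
  intro x. generalize (den_pos x). lra.
  apply Cn_plus. apply psi_smooth. apply Cn_comp. apply psi_smooth.
  apply Cn_ext with (fun x => 1 + (-1) * x). intro; ring.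
  apply Cn_plus. apply Cn_const. apply Cn_mult. apply Cn_const. apply Cn_id.
Qed.

Lemma phi_le0 s : s <= 0 -> phi s = 0.
Proof. intros H. unfold phi. rewrite psi_npos by auto. ring. Qed.

Lemma phi_ge1 s : 1 <= s -> phi s = 1.
Proof.
  intros H. unfold phi. rewrite (psi_npos (1 - s)) by lra. rewrite psi_pos by lra.
  assert (0 < exp (- / s)) by apply exp_pos. field. lra.
Qed.

Lemma phi_01 s : 0 <= phi s <= 1.
Proof.
  unfold phi. assert (H := den_pos s). assert (H1 := psi_ge0 s). assert (H2 := psi_ge0 (1 - s)).
  split. apply Rle_mult_inv_pos; auto.
  apply Rmult_le_reg_r with (psi s + psi (1 - s)). auto.
  rewrite Rmult_assoc, Rinv_l by lra. lra.
Qed.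

Lemma phi_G s : 0 < s < 1 -> phi s = G s.
Proof. intros H. unfold phi, G. rewrite !psi_pos by lra. reflexivity. Qed.

Lemma Dphi_in s : 0 < s < 1 -> Derive phi s = G1 s.
Proof.
  intros H. rewrite (Derive_ext_loc phi G).
  apply is_derive_unique. apply G_d; auto.
  generalize (loc_int 0 1 s H). apply filter_imp. intros t Ht. apply phi_G; auto.
Qed.

Lemma D2phi_in s : 0 < s < 1 -> Derive_n phi 2 s = G2 s.
Proof.
  intros H. change (Derive (Derive phi) s = G2 s). rewrite (Derive_ext_loc (Derive phi) G1).
  apply is_derive_unique. apply G1_d; auto.
  generalize (loc_int 0 1 s H). apply filter_imp. intros t Ht. apply Dphi_in; auto.
Qed.

Lemma Dphi_out s : s < 0 \/ 1 < s -> Derive phi s = 0 /\ Derive_n phi 2 s = 0.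
Proof.
  intros H. assert (exists c, locally s (fun t => phi t = c)) as [c Hc].
  { destruct H as [H|H].
    - exists 0. generalize (loc_lt 0 s H). apply filter_imp. intros t Ht. apply phi_le0; lra.
    - exists 1. generalize (loc_gt 1 s H). apply filter_imp. intros t Ht. apply phi_ge1; lra. }
  split.
  - change (Derive_n phi 1 s = 0). rewrite (Derive_n_ext_loc phi (fun _ => c)); auto. apply Derive_n_const.
  - rewrite (Derive_n_ext_loc phi (fun _ => c)); auto. apply Derive_n_const.
Qed.

Lemma cont_bound f x B : continuity_pt f x -> (forall y, y <> x -> Rabs (y - x) < 1/2 -> Rabs (f y) <= B) ->
  Rabs (f x) <= B.
Proof.
  intros Hc Hb. destruct (Rle_lt_dec (Rabs (f x)) B) as [|Hlt]; auto. exfalso.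
  unfold continuity_pt, continue_in, limit1_in, limit_in in Hc. simpl in Hc.
  destruct (Hc (Rabs (f x) - B) ltac:(lra)) as [alp [Halp Hal]].
  set (y := x + Rmin alp (1/2) / 2).
  assert (0 < Rmin alp (1/2)) by (apply Rmin_pos; lra).
  assert (Rmin alp (1/2) <= alp) by apply Rmin_l. assert (Rmin alp (1/2) <= 1/2) by apply Rmin_r.
  assert (Hy : Rabs (y - x) = Rmin alp (1/2) / 2). { unfold y. rewrite Rabs_right; lra. }
  specialize (Hal y). unfold R_dist in Hal.
  assert (Rabs (f y - f x) < Rabs (f x) - B). { apply Hal. split. split. exact I. unfold y. lra. lra. }
  assert (Rabs (f y) <= B) by (apply Hb; [unfold y; lra| lra]).
  assert (Rabs (f x) <= Rabs (f y) + Rabs (f y - f x)).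
  { replace (f x) with (f y - (f y - f x)) at 1 by ring. eapply Rle_trans. apply Rabs_triang. rewrite Rabs_Ropp. lra. }
  lra.
Qed.

Lemma Dphi_bound s : Rabs (Derive phi s) <= 23 /\ Rabs (Derive_n phi 2 s) <= 23.
Proof.
  assert (Hnot : forall y, y <> 0 -> y <> 1 -> Rabs (Derive phi y) <= 23 /\ Rabs (Derive_n phi 2 y) <= 23).
  { intros y H0 H1. destruct (Rtotal_order y 0) as [Hn|[Hz|Hp]]; [| lra |].
    - destruct (Dphi_out y (or_introl Hn)) as [-> ->]. rewrite Rabs_R0. lra.
    - destruct (Rtotal_order y 1) as [Hl|[He|Hg]]; [| lra |].
      + rewrite Dphi_in, D2phi_in by lra. split; [apply G1_bound| apply G2_bound]; lra.
      + destruct (Dphi_out y (or_intror Hg)) as [-> ->]. rewrite Rabs_R0. lra. }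
  assert (C1 : forall x, continuity_pt (Derive phi) x).
  { intro x. apply derivable_continuous_pt. apply ex_derive_Reals_0.
    generalize (phi_smooth 2%nat 2%nat x ltac:(lia)). apply ex_derive_ext. reflexivity. }
  assert (C2 : forall x, continuity_pt (Derive_n phi 2) x).
  { intro x. apply derivable_continuous_pt. apply ex_derive_Reals_0.
    exact (phi_smooth 3%nat 3%nat x ltac:(lia)). }
  destruct (Req_dec s 0) as [->|H0].
  { split; apply cont_bound; auto; intros y Hy1 Hy2; (apply Hnot; [auto | rewrite Rminus_0_r in Hy2; apply Rabs_lt_between in Hy2; lra]). }
  destruct (Req_dec s 1) as [->|H1].
  { split; apply cont_bound; auto; intros y Hy1 Hy2; (apply Hnot; [ apply Rabs_lt_between in Hy2; lra | auto]). }
  apply Hnot; auto.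
Qed.

Lemma phi_ex x : ex_derive phi x.
Proof. exact (phi_smooth 1%nat 1%nat x ltac:(lia)). Qed.
Lemma phi_ex2 x : ex_derive (Derive phi) x.
Proof. generalize (phi_smooth 2%nat 2%nat x ltac:(lia)). apply ex_derive_ext. reflexivity. Qed.

Lemma DH c y : Derive (fun y => phi ((y - c) / (9/10))) y = 10/9 * Derive phi ((y - c) / (9/10)).
Proof.
  apply is_derive_unique. auto_derive. apply phi_ex.
  change (fun x : R => phi x) with phi. replace ((y + - c) * / (9 / 10)) with ((y - c) / (9 / 10)) by reflexivity. field.
Qed.

Lemma DH2 c y : Derive (fun y => Derive phi ((y - c) / (9/10))) y = 10/9 * Derive_n phi 2 ((y - c) / (9/10)).
Proof.
  apply is_derive_unique. auto_derive. apply phi_ex2.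
  change (fun x : R => Derive phi x) with (Derive phi).
  replace ((y + - c) * / (9 / 10)) with ((y - c) / (9 / 10)) by reflexivity.
  change (Derive_n phi 2 ((y - c) / (9 / 10))) with (Derive (Derive phi) ((y - c) / (9 / 10))). field.
Qed.

Section Curve.
Variable a : R.
Variable xs : nat -> R.
Hypothesis Hxs : forall l, a < xs l <= a + 1/2.

Definition Hc (l : nat) (y : R) : R :=
  xs l + (xs (S l) - xs l) * phi ((y - (INR l + 1/20)) / (9/10)).

Definition fl (t : R) : nat := Z.to_nat (Int_part t).

Definition gxc (t : R) : R := if Rlt_dec t 0 then xs 0 else Hc (fl t) t.

Lemma fl_spec l t : INR l <= t < INR l + 1 -> fl t = l.
Proof.
  intros H. unfold fl, Int_part.
  assert (E : (Z.of_nat l + 1)%Z = up t).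
  { apply tech_up; rewrite plus_IZR, <- INR_IZR_INZ; simpl; lra. }
  rewrite <- E. replace (Z.of_nat l + 1 - 1)%Z with (Z.of_nat l) by ring. apply Nat2Z.id.
Qed.

Lemma fl_ex t : 0 <= t -> INR (fl t) <= t < INR (fl t) + 1.
Proof.
  intros Ht. destruct (base_Int_part t) as [H1 H2].
  assert (Hz : (0 <= Int_part t)%Z).
  { apply le_IZR. assert (IZR (Int_part t) > -1) by lra.
    assert (-1 < Int_part t)%Z by (apply lt_IZR; simpl; lra). apply IZR_le. lia. }
  unfold fl. rewrite INR_IZR_INZ, Z2Nat.id by auto. lra.
Qed.

Lemma Hc_left l y : y <= INR l + 1/20 -> Hc l y = xs l.
Proof. intros H. unfold Hc. rewrite phi_le0. ring. apply Rmult_le_0_r; lra. Qed.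

Lemma Hc_right l y : INR l + 1 - 1/20 <= y -> Hc l y = xs (S l).
Proof.
  intros H. unfold Hc. rewrite phi_ge1. ring.
  apply Rmult_le_reg_r with (9/10). lra. unfold Rdiv. rewrite Rmult_assoc, Rinv_l; lra.
Qed.

Lemma gx_eq_H l y : (INR l - 1/20 < y \/ l = 0%nat) -> y < INR l + 1 -> gxc y = Hc l y.
Proof.
  intros H1 H2. unfold gxc. assert (Hl := pos_INR l).
  destruct (Rlt_dec y 0) as [Hn|Hn].
  - destruct l as [|l]. rewrite Hc_left; auto. simpl; lra.
    destruct H1 as [H1|H1]; [|discriminate]. rewrite S_INR in H1. assert (Hl' := pos_INR l). lra.
  - destruct (Rle_lt_dec (INR l) y).
    + rewrite (fl_spec l y). reflexivity. lra.
    + destruct l as [|l]. simpl in *; lra.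
      destruct H1 as [H1|H1]; [|discriminate].
      rewrite S_INR in *. rewrite (fl_spec l y) by lra.
      rewrite (Hc_right l y) by lra. rewrite (Hc_left (S l) y) by (rewrite S_INR; lra). reflexivity.
Qed.

Lemma gx_loc t : exists l, locally t (fun y => Hc l y = gxc y).
Proof.
  destruct (Rlt_dec t 0) as [Hn|Hn].
  - exists 0%nat. generalize (loc_int (t - 1) 1 t ltac:(lra)). apply filter_imp.
    intros y Hy. symmetry. apply gx_eq_H. auto. simpl; lra.
  - exists (fl t). destruct (fl_ex t ltac:(lra)).
    generalize (loc_int (INR (fl t) - 1/20) (INR (fl t) + 1) t ltac:(lra)). apply filter_imp.
    intros y Hy. symmetry. apply gx_eq_H; lra.
Qed.

Lemma Hc_smooth n l : Cn n (Hc l).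
Proof.
  unfold Hc. apply Cn_plus. apply Cn_const. apply Cn_mult. apply Cn_const.
  apply Cn_comp. apply phi_smooth.
  apply Cn_ext with (fun y => (10/9) * y + (- (INR l + 1/20) * (10/9))). intro; field.
  apply Cn_plus. apply Cn_mult. apply Cn_const. apply Cn_id. apply Cn_const.
Qed.

Lemma gx_smooth n : Cn n gxc.
Proof.
  apply Cn_loc. intro x. destruct (gx_loc x) as [l Hl]. exists (Hc l). split; auto. apply Hc_smooth.
Qed.

Lemma DHc l y : Derive (Hc l) y = (xs (S l) - xs l) * (10/9 * Derive phi ((y - (INR l + 1/20)) / (9/10))).
Proof.
  unfold Hc. rewrite Derive_plus. rewrite Derive_const. rewrite Derive_scal. rewrite DH. ring.
  apply ex_derive_const. apply ex_derive_scal. apply (ex_derive_comp phi). apply phi_ex.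
  auto_derive. auto.
Qed.
End Curve.

Lemma D2Hc xs l y : Derive_n (Hc xs l) 2 y = (xs (S l) - xs l) * (10/9 * (10/9 * Derive_n phi 2 ((y - (INR l + 1/20)) / (9/10)))).
Proof.
  transitivity (Derive (Derive (Hc xs l)) y). reflexivity.
  rewrite (Derive_ext (Derive (Hc xs l)) (fun y => (xs (S l) - xs l) * (10/9 * Derive phi ((y - (INR l + 1/20)) / (9/10))))).
  2: { intro t. apply DHc. }
  rewrite Derive_scal. rewrite Derive_scal. rewrite DH2. reflexivity.
Qed.

Lemma Did t : Derive (fun t => t) t = 1.
Proof. apply is_derive_unique. auto_derive; auto. Qed.

Lemma D2id t : Derive_n (fun t => t) 2 t = 0.
Proof.
  change (Derive (Derive (fun t => t)) t = 0).
  rewrite (Derive_ext (Derive (fun t => t)) (fun _ => 1)). apply Derive_const. apply Did.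
Qed.

Section Curve2.
Variable a : R.
Variable xs : nat -> R.
Hypothesis Hxs : forall l, a < xs l <= a + 1/2.

Lemma gx_D t : Rabs (Derive (gxc xs) t) <= 13 /\ Rabs (Derive_n (gxc xs) 2 t) < 15.
Proof.
  destruct (gx_loc xs t) as [l Hl].
  rewrite <- (Derive_ext_loc (Hc xs l) (gxc xs) t Hl).
  rewrite <- (Derive_n_ext_loc (Hc xs l) (gxc xs) 2 t Hl).
  rewrite DHc, D2Hc.
  set (s := (t - (INR l + 1 / 20)) / (9 / 10)).
  destruct (Dphi_bound s) as [B1 B2].
  assert (HD : Rabs (xs (S l) - xs l) <= 1/2).
  { generalize (Hxs l) (Hxs (S l)). intros. apply Rabs_le. lra. }
  assert (0 <= Rabs (xs (S l) - xs l)) by apply Rabs_pos.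
  assert (0 <= Rabs (Derive phi s)) by apply Rabs_pos.
  assert (0 <= Rabs (Derive_n phi 2 s)) by apply Rabs_pos.
  rewrite !Rabs_mult. rewrite !(Rabs_right (10/9)) by lra.
  split; nra.
Qed.

Lemma gx_range t : a <= gxc xs t <= a + 1.
Proof.
  unfold gxc. destruct (Rlt_dec t 0). generalize (Hxs 0%nat); lra.
  unfold Hc. set (p := phi _). assert (Hp := phi_01 ((t - (INR (fl t) + 1 / 20)) / (9 / 10))).
  fold p in Hp. generalize (Hxs (fl t)) (Hxs (S (fl t))). intros. nra.
Qed.

Lemma gx_at l : gxc xs (INR l) = xs l.
Proof.
  rewrite (gx_eq_H xs l (INR l)) by lra. apply Hc_left. lra.
Qed.

Lemma gx_near l t eps : 0 < eps < 1/20 -> INR l - eps < t < INR l + eps -> gxc xs t = xs l.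
Proof.
  intros He Ht. rewrite (gx_eq_H xs l t) by lra. apply Hc_left. lra.
Qed.
End Curve2.

Lemma curve_exists a xs : (forall l, a < xs l <= a + 1/2) ->
  exists gx gy : R -> R,
    properly_embedded_curve gx gy /\
    (forall t, a <= gx t <= a + 1) /\
    (exists d, 0 < d /\ forall t, d <= Rabs (unit_tangent_y gx gy t)) /\
    (forall l : nat, exists t, gx t = xs l /\ gy t = INR l) /\
    (forall t, Rabs (curvature gx gy t) < 15) /\
    (forall eps, 0 < eps < 1/20 -> forall l : nat, exists a b, a < b /\
        forall x y,
          (exists t, a < t < b /\ gx t = x /\ gy t = y) <->
          (x = xs l /\ INR l - eps < y < INR l + eps)).
Proof.
  intros Hxs. exists (gxc xs), (fun t => t).
  split; [|split; [|split; [|split; [|split]]]].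
  - split; [|split; [|split; [|split]]].
    + intros n t. apply (gx_smooth xs n n t). lia.
    + intros n t. apply (Cn_id n n t). lia.
    + intro t. right. rewrite Did. lra.
    + auto.
    + intro B. exists B. intros t Ht.
      apply Rlt_le_trans with (Rabs t). auto.
      rewrite <- sqrt_Rsqr_abs. apply sqrt_le_1_alt. unfold Rsqr.
      assert (0 <= gxc xs t ^ 2) by apply pow2_ge_0. simpl. lra.
  - apply gx_range. auto.
  - exists (1/14). split. lra. intro t. unfold unit_tangent_y, speed. rewrite Did.
    destruct (gx_D a xs Hxs t) as [H1 _].
    set (g := Derive (gxc xs) t) in *.
    assert (Hs1 : 1 <= sqrt (g ^ 2 + 1 ^ 2)).
    { apply Rle_trans with (sqrt 1). rewrite sqrt_1; lra. apply sqrt_le_1_alt. assert (0 <= g^2) by apply pow2_ge_0. lra. }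
    assert (Hs2 : sqrt (g ^ 2 + 1 ^ 2) <= 14).
    { apply Rle_trans with (sqrt (14 ^ 2)). apply sqrt_le_1_alt.
      assert (g ^ 2 <= 13 ^ 2). { rewrite <- (pow2_abs g). apply pow_incr. split. apply Rabs_pos. auto. }
      lra. rewrite sqrt_pow2; lra. }
    rewrite Rabs_right. 2: { apply Rle_ge. apply Rle_mult_inv_pos; lra. }
    unfold Rdiv. rewrite !Rmult_1_l. apply Rinv_le_contravar; lra.
  - intro l. exists (INR l). split. apply gx_at. auto.
  - intro t. unfold curvature, speed. rewrite Did, D2id.
    destruct (gx_D a xs Hxs t) as [_ H2].
    set (g := Derive (gxc xs) t) in *. set (g2 := Derive_n (gxc xs) 2 t) in *.
    assert (Hs1 : 1 <= sqrt (g ^ 2 + 1 ^ 2)).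
    { apply Rle_trans with (sqrt 1). rewrite sqrt_1; lra. apply sqrt_le_1_alt. assert (0 <= g^2) by apply pow2_ge_0. lra. }
    set (S := sqrt (g ^ 2 + 1 ^ 2)) in *.
    assert (HS3 : 1 <= S ^ 3).
    { replace 1 with (1 ^ 3) by ring. apply pow_incr. lra. }
    replace ((g * 0 - 1 * g2) / S ^ 3) with (- g2 * / S ^ 3) by (field; lra).
    rewrite Rabs_mult, Rabs_Ropp. rewrite (Rabs_right (/ S ^ 3)).
    2: { apply Rle_ge. left. apply Rinv_0_lt_compat. lra. }
    assert (/ S ^ 3 <= 1). { rewrite <- Rinv_1. apply Rinv_le_contravar; lra. }
    assert (0 < / S ^ 3) by (apply Rinv_0_lt_compat; lra).
    assert (0 <= Rabs g2) by apply Rabs_pos. nra.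
  - intros eps He l. exists (INR l - eps), (INR l + eps). split. lra.
    intros x y. split.
    + intros [t [Ht [<- <-]]]. split. apply (gx_near xs l t eps); auto. auto.
    + intros [-> Hy]. exists y. split. auto. split; auto. apply (gx_near xs l y eps); auto.
Qed.

Lemma step_state M (HM : TM_wf M) cfg : (1 <= fst (fst cfg) <= tm_m M)%nat ->
  (1 <= fst (fst (step M cfg)) <= tm_m M)%nat.
Proof.
  destruct cfg as [[q r] s]. intros Hq. simpl in Hq. unfold step.
  destruct (Nat.eqb q (tm_qh M)). simpl; auto.
  destruct HM as [_ [_ HD]].
  specialize (HD q (r mod 10)%nat Hq (Nat.mod_upper_bound r 10 ltac:(lia))).
  destruct (tm_delta M q (r mod 10)) as [[q' w] d]. destruct HD as [HD _].
  destruct d; simpl; auto.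
Qed.

Lemma iter_state M (HM : TM_wf M) l cfg : (1 <= fst (fst cfg) <= tm_m M)%nat ->
  (1 <= fst (fst (Delta_iter M l cfg)) <= tm_m M)%nat.
Proof.
  intros Hq. induction l as [|l IH]. auto.
  change (Delta_iter M (S l) cfg) with (step M (Delta_iter M l cfg)). apply step_state; auto.
Qed.

Lemma enc_bound cfg : (1 <= fst (fst cfg))%nat -> 0 < enc cfg <= 1/2.
Proof.
  destruct cfg as [[q r] s]. simpl. intros Hq. unfold enc.
  assert (H2 : 2 <= 2 ^ q).
  { destruct q. lia. simpl. assert (1 <= 2 ^ q) by (apply pow_R1_Rle; lra). lra. }
  assert (H3 : 1 <= 3 ^ r) by (apply pow_R1_Rle; lra).
  assert (H5 : 1 <= 5 ^ s) by (apply pow_R1_Rle; lra).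
  assert (Hp : 2 <= 2 ^ q * 3 ^ r * 5 ^ s).
  { assert (2 <= 2 ^ q * 3 ^ r) by nra. nra. }
  split. apply Rinv_0_lt_compat; lra.
  replace (1/2) with (/ 2) by field. apply Rinv_le_contravar; lra.
Qed.

Theorem mainTheorem4 (M : TM) (HM : TM_wf M) (c : nat -> nat * nat)
  (Hc : init_enum M c) :
  exists eps0 : R, 0 < eps0 /\
  forall eps : R, 0 < eps < eps0 ->
  forall i : nat,
  exists gx gy : R -> R,
    properly_embedded_curve gx gy /\
    (forall t, 2 * INR i <= gx t <= 2 * INR i + 1) /\
    (exists d, 0 < d /\ forall t, d <= Rabs (unit_tangent_y gx gy t)) /\
    (forall l : nat, exists t,
        gx t = enc (Delta_iter M l (init_cfg M (c i))) + 2 * INR i /\ gy t = INR l) /\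
    (forall t, Rabs (curvature gx gy t) < 15) /\
    (forall l : nat, exists a b, a < b /\
        forall x y,
          (exists t, a < t < b /\ gx t = x /\ gy t = y) <->
          (x = enc (Delta_iter M l (init_cfg M (c i))) + 2 * INR i /\
           INR l - eps < y < INR l + eps)).
Proof.
  exists (1/20). split. lra. intros eps He i.
  set (xs := fun l => enc (Delta_iter M l (init_cfg M (c i))) + 2 * INR i).
  assert (Hxs : forall l, 2 * INR i < xs l <= 2 * INR i + 1/2).
  { intro l. unfold xs. assert (Hq := iter_state M HM l (init_cfg M (c i))).
    assert (Hq0 := proj1 HM). specialize (Hq Hq0).
    assert (H := enc_bound (Delta_iter M l (init_cfg M (c i)))). specialize (H ltac:(lia)).
    assert (0 <= INR i) by apply pos_INR. lra. }
  destruct (curve_exists (2 * INR i) xs Hxs) as [gx [gy [P1 [P2 [P3 [P4 [P5 P6]]]]]]].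
  exists gx, gy. split; [exact P1|split;[exact P2| split; [exact P3| split; [exact P4| split; [exact P5| exact (P6 eps He)]]]]].
Qed.
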